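(* Let $\Omega_n=\dfrac{\pi^{n/2}}{\Gamma\left(\frac n2+1\right)}$ for $n\in\mathbb{N}_0$, and \[ c(n)=1+\frac1{4n}+\frac1{32n^2}-\frac5{128n^3}-\frac{21}{2048n^4}+\frac{399}{8192n^5},\qquad d(n)=c(n)+\frac{869}{65536n^6}. \] Then $\sqrt{\frac{n}{2\pi}}\,c(n)<\frac{\Omega_{n-1}}{\Omega_n}$ for every integer $n\ge12$, and $\frac{\Omega_{n-1}}{\Omega_n}<\sqrt{\frac n{2\pi}}\,d(n)$ for every integer $n\ge1$.
   Context: $\Omega_n$ is the volume of the unit ball in $\mathbb{R}^n$ ($\Omega_0=1$); $\Gamma$ is Euler's gamma function. *)

(* Defs.v *)
From Stdlib Require Import Reals.
From Coquelicot Require Import Coquelicot.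
Open Scope R_scope.

Definition Gamma (x : R) : R :=
  RInt_gen (fun t => Rpower t (x - 1) * exp (- t)) (at_right 0) (Rbar_locally p_infty).

Definition Omega (n : nat) : R :=
  Rpower PI (INR n / 2) / Gamma (INR n / 2 + 1).

Definition c_fn (n : nat) : R :=
  let x := INR n in
  1 + 1 / (4 * x) + 1 / (32 * x ^ 2) - 5 / (128 * x ^ 3)
    - 21 / (2048 * x ^ 4) + 399 / (8192 * x ^ 5).

Definition d_fn (n : nat) : R := c_fn n + 869 / (65536 * INR n ^ 6).

(* Main.v *)
Require Import Defs.
From Stdlib Require Import Reals.
From Coquelicot Require Import Coquelicot.
From Stdlib Require Import Lra Lia.
Open Scope R_scope.


Definition Lim2 (F : R -> R -> R) (l : R) :=
  forall eps, 0 < eps -> exists d, 0 < d /\ exists M,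
    forall a b, 0 < a -> a < d -> M < b -> Rabs (F a b - l) < eps.

Lemma gen_of_eps (f : R -> R) (l : R) :
  (forall a b, 0 < a -> a < b -> ex_RInt f a b) ->
  Lim2 (fun a b => RInt f a b) l ->
  is_RInt_gen f (at_right 0) (Rbar_locally p_infty) l.
Proof.
  intros Hex Hl P [eps HP].
  destruct (Hl eps (cond_pos eps)) as [d [Hd [M HM]]].
  unfold filtermapi.
  apply (Filter_prod _ _ _ (fun a => 0 < a /\ a < d) (fun b => Rmax M d < b)).
  - exists (mkposreal d Hd). intros y Hy Hy0. change R in y. split; [exact Hy0|].
    assert (Hy2 : Rabs (y - 0) < d) by exact Hy.
    rewrite Rminus_0_r in Hy2. apply Rabs_lt_between in Hy2. lra.
  - exists (Rmax M d). intros x Hx. exact Hx.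
  - intros x y [Hx0 Hxd] Hy. simpl. exists (RInt (V:=R_CompleteNormedModule) f x y). split.
    + apply (RInt_correct (V:=R_CompleteNormedModule)), Hex; auto. pose proof (Rmax_r M d); lra.
    + apply HP. unfold ball; simpl; unfold AbsRing_ball, abs, minus, plus, opp; simpl.
      apply HM; auto. pose proof (Rmax_l M d); lra.
Qed.

Lemma RInt_mono_int (f : R -> R) a a0 b0 b :
  (forall a b, 0 < a -> a < b -> ex_RInt f a b) ->
  (forall t, 0 < t -> 0 <= f t) ->
  0 < a -> a <= a0 -> a0 < b0 -> b0 <= b -> RInt f a0 b0 <= RInt f a b.
Proof.
  intros Hex Hpos Ha H1 H2 H3.
  assert (E1 : ex_RInt f a a0) by (destruct (Req_dec a a0); [subst; apply ex_RInt_point| apply Hex; lra]).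
  assert (E2 : ex_RInt f b0 b) by (destruct (Req_dec b0 b); [subst; apply ex_RInt_point| apply Hex; lra]).
  assert (E3 : ex_RInt f a0 b0) by (apply Hex; lra).
  rewrite <- (RInt_Chasles f a a0 b); [| exact E1 | apply (ex_RInt_Chasles _ _ b0); auto].
  rewrite <- (RInt_Chasles f a0 b0 b); auto.
  assert (0 <= RInt f a a0) by (apply RInt_ge_0; auto; intros; apply Hpos; lra).
  assert (0 <= RInt f b0 b) by (apply RInt_ge_0; auto; intros; apply Hpos; lra).
  unfold plus; simpl. lra.
Qed.

Lemma exist_lim (f : R -> R) B :
  (forall a b, 0 < a -> a < b -> ex_RInt f a b) ->
  (forall t, 0 < t -> 0 <= f t) ->
  (forall a b, 0 < a -> a < b -> RInt f a b <= B) ->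
  exists l, Lim2 (fun a b => RInt f a b) l.
Proof.
  intros Hex Hpos HB.
  set (E := fun v => exists a b, 0 < a /\ a < b /\ v = RInt f a b).
  assert (Hb : bound E) by (exists B; intros v [a [b [? [? ->]]]]; apply HB; auto).
  assert (He : exists v, E v) by (exists (RInt f 1 2), 1, 2; repeat split; lra).
  destruct (completeness E Hb He) as [m [Hub Hlub]].
  exists m. intros eps Heps.
  assert (exists a0 b0, 0 < a0 /\ a0 < b0 /\ m - eps < RInt f a0 b0) as [a0 [b0 [Ha0 [Hab Hv]]]].
  { apply Classical_Prop.NNPP. intro Hn.
    assert (m <= m - eps); [|lra].
    apply Hlub. intros v [a [b [Ha [Hab ->]]]].
    apply Rnot_lt_le. intro Hc. apply Hn. exists a, b. auto. }
  exists a0. split; auto. exists b0. intros a b Ha Had Hbm.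
  assert (RInt f a0 b0 <= RInt f a b) by (apply RInt_mono_int; auto; lra).
  assert (RInt f a b <= m) by (apply Hub; exists a, b; repeat split; auto; lra).
  apply Rabs_lt_between. lra.
Qed.

Lemma Lim2_le F G l m :
  Lim2 F l -> Lim2 G m ->
  (forall a b, 0 < a -> a < 1 -> 2 < b -> F a b <= G a b) -> l <= m.
Proof.
  intros HF HG H. apply Rnot_lt_le. intro Hlt.
  set (eps := (l - m) / 2).
  destruct (HF eps ltac:(unfold eps; lra)) as [d1 [Hd1 [M1 H1]]].
  destruct (HG eps ltac:(unfold eps; lra)) as [d2 [Hd2 [M2 H2]]].
  set (a := Rmin 1 (Rmin d1 d2) / 2).
  set (b := Rmax 2 (Rmax M1 M2) + 1).
  assert (0 < Rmin 1 (Rmin d1 d2)) by (repeat apply Rmin_pos; lra).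
  pose proof (Rmin_l 1 (Rmin d1 d2)). pose proof (Rmin_r 1 (Rmin d1 d2)).
  pose proof (Rmin_l d1 d2). pose proof (Rmin_r d1 d2).
  pose proof (Rmax_l 2 (Rmax M1 M2)). pose proof (Rmax_r 2 (Rmax M1 M2)).
  pose proof (Rmax_l M1 M2). pose proof (Rmax_r M1 M2).
  specialize (H1 a b). specialize (H2 a b). specialize (H a b).
  unfold a, b in *.
  apply Rabs_lt_between in H1; [|lra|lra|lra].
  apply Rabs_lt_between in H2; [|lra|lra|lra].
  specialize (H ltac:(lra) ltac:(lra) ltac:(lra)). unfold eps in *. lra.
Qed.

Lemma Lim2_comb F G l m p q :
  Lim2 F l -> Lim2 G m -> Lim2 (fun a b => p * F a b + q * G a b) (p * l + q * m).
Proof.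
  intros HF HG eps Heps.
  set (k := Rabs p + Rabs q + 1).
  assert (Hk : 0 < k) by (unfold k; pose proof (Rabs_pos p); pose proof (Rabs_pos q); lra).
  destruct (HF (eps / k) ltac:(apply Rdiv_lt_0_compat; lra)) as [d1 [Hd1 [M1 H1]]].
  destruct (HG (eps / k) ltac:(apply Rdiv_lt_0_compat; lra)) as [d2 [Hd2 [M2 H2]]].
  exists (Rmin d1 d2). split; [apply Rmin_pos; lra|]. exists (Rmax M1 M2).
  intros a b Ha Hd HM.
  pose proof (Rmin_l d1 d2). pose proof (Rmin_r d1 d2).
  pose proof (Rmax_l M1 M2). pose proof (Rmax_r M1 M2).
  specialize (H1 a b Ha ltac:(lra) ltac:(lra)). specialize (H2 a b Ha ltac:(lra) ltac:(lra)).
  replace (p * F a b + q * G a b - (p * l + q * m)) with (p * (F a b - l) + q * (G a b - m)) by ring.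
  eapply Rle_lt_trans; [apply Rabs_triang|]. rewrite !Rabs_mult.
  assert (Rabs p * Rabs (F a b - l) <= Rabs p * (eps / k)) by (apply Rmult_le_compat_l; [apply Rabs_pos|lra]).
  assert (Rabs q * Rabs (G a b - m) <= Rabs q * (eps / k)) by (apply Rmult_le_compat_l; [apply Rabs_pos|lra]).
  assert ((Rabs p + Rabs q) * (eps / k) < eps).
  { apply (Rmult_lt_reg_r k); [exact Hk|].
    replace ((Rabs p + Rabs q) * (eps / k) * k) with ((Rabs p + Rabs q) * eps) by (field; lra).
    unfold k. nra. }
  lra.
Qed.

Lemma Lim2_ext F G l :
  (forall a b, 0 < a -> a < 1 -> 2 < b -> F a b = G a b) -> Lim2 F l -> Lim2 G l.
Proof.
  intros E HF eps Heps. destruct (HF eps Heps) as [d [Hd [M H]]].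
  exists (Rmin d 1). split; [apply Rmin_pos; lra|]. exists (Rmax M 2).
  intros a b Ha Hd' HM. pose proof (Rmin_l d 1). pose proof (Rmin_r d 1).
  pose proof (Rmax_l M 2). pose proof (Rmax_r M 2).
  rewrite <- E by lra. apply H; lra.
Qed.


Lemma cont_of_der (f : R -> R) x : ex_derive f x -> continuous f x.
Proof. apply (ex_derive_continuous (K:=R_AbsRing) (V:=R_NormedModule)). Qed.

Lemma exp_mono x y : x <= y -> exp x <= exp y.
Proof. intros [H|H]; [left; apply exp_increasing; exact H| subst; lra]. Qed.

Definition gf (y t : R) := Rpower t (y - 1) * exp (- t).

Lemma gf_derive y t : 0 < t -> ex_derive (gf y) t.
Proof. intros Ht. unfold gf, Rpower. auto_derive. lra. Qed.

Lemma gf_ex y a b : 0 < a -> a < b -> ex_RInt (gf y) a b.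
Proof.
  intros Ha Hab. apply (ex_RInt_continuous (V:=R_CompleteNormedModule)). intros z Hz.
  rewrite Rmin_left in Hz by lra. apply cont_of_der, gf_derive. lra.
Qed.

Lemma gf_pos y t : 0 <= gf y t.
Proof. unfold gf, Rpower. pose proof (exp_pos ((y-1) * ln t)); pose proof (exp_pos (-t)). nra. Qed.

Lemma ln_le_m1 x : 0 < x -> ln x <= x - 1.
Proof. intros Hx. pose proof (exp_ineq1_le (ln x)). rewrite exp_ln in H by lra. lra. Qed.

Lemma Rpower_bound al t : 0 <= al -> 0 < t ->
  Rpower t al <= exp (al * ln (2 * al + 2)) * exp (t / 2).
Proof.
  intros Hal Ht. unfold Rpower. rewrite <- exp_plus. apply exp_mono.
  set (c := 2 * al + 2).
  assert (Hc : 0 < c) by (unfold c; lra).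
  assert (E : ln t = ln (t / c) + ln c).
  { rewrite <- ln_mult by (try apply Rdiv_lt_0_compat; lra). f_equal. field. lra. }
  pose proof (ln_le_m1 (t / c) ltac:(apply Rdiv_lt_0_compat; lra)).
  rewrite E.
  assert (al * (t / c) <= t / 2).
  { unfold c. apply (Rmult_le_reg_r (2 * al + 2)); [lra|].
    replace (al * (t / (2 * al + 2)) * (2 * al + 2)) with (al * t) by (field; lra). nra. }
  nra.
Qed.

Lemma exp_half_int K a b : a <= b ->
  RInt (fun t => K * exp (- t / 2)) a b = 2 * K * exp (- a / 2) - 2 * K * exp (- b / 2).
Proof.
  intros Hab.
  apply (is_RInt_unique (V:=R_CompleteNormedModule)).
  assert (H := is_RInt_derive (fun t => - 2 * K * exp (- t / 2)) (fun t => K * exp (- t / 2)) a b).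
  unfold minus, plus, opp in H; simpl in H.
  replace (2 * K * exp (- a / 2) - 2 * K * exp (- b / 2)) with
    (- 2 * K * exp (- b / 2) + - (- 2 * K * exp (- a / 2))) by ring.
  apply H.
  - intros x _. auto_derive; auto. unfold Rdiv. field.
  - intros x _. apply cont_of_der. auto_derive. auto.
Qed.

Lemma gf_int_bound y a b : 1 <= y -> 0 < a -> a < b ->
  RInt (gf y) a b <= 2 * exp ((y - 1) * ln (2 * (y - 1) + 2)).
Proof.
  intros Hy Ha Hab. set (K := exp ((y - 1) * ln (2 * (y - 1) + 2))).
  assert (HK : 0 < K) by apply exp_pos.
  apply Rle_trans with (RInt (fun t => K * exp (- t / 2)) a b).
  - apply RInt_le; [lra | apply gf_ex; auto | |].
    + apply (ex_RInt_continuous (V:=R_CompleteNormedModule)). intros z _. apply cont_of_der. auto_derive. auto.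
    + intros x Hx. unfold gf. pose proof (Rpower_bound (y - 1) x ltac:(lra) ltac:(lra)).
      fold K in H.
      replace (exp (- x / 2)) with (exp (x / 2) * exp (- x)).
      2:{ rewrite <- exp_plus. f_equal. field. }
      pose proof (exp_pos (-x)). nra.
  - rewrite exp_half_int by lra. pose proof (exp_pos (- a / 2)). pose proof (exp_pos (- b / 2)).
    assert (exp (- a / 2) <= 1).
    { rewrite <- exp_0. apply exp_mono. lra. }
    nra.
Qed.

Lemma gamma_lim y : 1 <= y -> Lim2 (fun a b => RInt (gf y) a b) (Gamma y).
Proof.
  intros Hy.
  destruct (exist_lim (gf y) (2 * exp ((y - 1) * ln (2 * (y - 1) + 2)))) as [l Hl].
  - intros; apply gf_ex; auto.
  - intros; apply gf_pos.
  - intros; apply gf_int_bound; auto.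
  - replace (Gamma y) with l; [exact Hl|].
    symmetry. unfold Gamma. apply is_RInt_gen_unique.
    apply gen_of_eps; [intros; apply gf_ex; auto| exact Hl].
Qed.

Lemma Lim2_const c : Lim2 (fun _ _ => c) c.
Proof. intros eps Heps. exists 1. split; [lra|]. exists 0. intros. rewrite Rminus_eq_0, Rabs_R0. lra. Qed.

Lemma Lim2_unique F l m : Lim2 F l -> Lim2 F m -> l = m.
Proof. intros H1 H2. apply Rle_antisym; apply (Lim2_le F F); auto; intros; lra. Qed.

Lemma RInt_12 y : 1 <= y -> exp (-2) <= RInt (gf y) 1 2.
Proof.
  intros Hy.
  apply Rle_trans with (RInt (fun _ => exp (-2)) 1 2).
  - rewrite RInt_const. unfold scal; simpl; unfold mult; simpl. lra.
  - apply RInt_le; [lra| apply (ex_RInt_continuous (V:=R_CompleteNormedModule)); intros; apply continuous_const | apply gf_ex; lra|].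
    intros x Hx. unfold gf, Rpower.
    assert (0 < ln x) by (rewrite <- ln_1; apply ln_increasing; lra).
    assert (1 <= exp ((y - 1) * ln x)) by (apply Rle_trans with (exp 0); [rewrite exp_0; lra| apply exp_mono; nra]).
    assert (exp (-2) <= exp (- x)) by (apply exp_mono; lra).
    pose proof (exp_pos (-2)). nra.
Qed.

Lemma gamma_pos y : 1 <= y -> 0 < Gamma y.
Proof.
  intros Hy. apply Rlt_le_trans with (exp (-2)); [apply exp_pos|].
  apply Rle_trans with (RInt (gf y) 1 2); [apply RInt_12; auto|].
  apply (Lim2_le (fun _ _ => RInt (gf y) 1 2) (fun a b => RInt (gf y) a b)).
  - apply Lim2_const.
  - apply gamma_lim; auto.
  - intros a b Ha Ha1 Hb. apply RInt_mono_int; auto; try lra.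
    + intros; apply gf_ex; auto.
    + intros; apply gf_pos.
Qed.

Lemma rec_int y a b : 0 < a -> a < b ->
  RInt (gf (y + 1)) a b = y * RInt (gf y) a b + (Rpower a y * exp (- a) - Rpower b y * exp (- b)).
Proof.
  intros Ha Hab. apply (is_RInt_unique (V:=R_CompleteNormedModule)).
  set (g := fun t => - (Rpower t y * exp (- t))).
  set (D := fun t => Rpower t y * exp (- t) - y * gf y t).
  assert (HD : is_RInt D a b (minus (g b) (g a))).
  { apply (is_RInt_derive (V:=R_CompleteNormedModule)).
    - intros x Hx. rewrite Rmin_left, Rmax_right in Hx by lra.
      unfold g, D, gf, Rpower. auto_derive; [lra|].
      assert (E : exp ((y - 1) * ln x) = exp (y * ln x) / x).
      { replace ((y - 1) * ln x) with (y * ln x + - ln x) by ring.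
        rewrite exp_plus, exp_Ropp, exp_ln by lra. unfold Rdiv. ring. }
      rewrite E. field. lra.
    - intros x Hx. rewrite Rmin_left, Rmax_right in Hx by lra.
      apply cont_of_der. unfold D, gf, Rpower. auto_derive. lra. }
  assert (HI := RInt_correct (V:=R_CompleteNormedModule) (gf y) a b (gf_ex y a b Ha Hab)).
  assert (H := is_RInt_plus _ _ a b _ _ (is_RInt_scal _ a b y _ HI) HD).
  replace (y * RInt (gf y) a b + (Rpower a y * exp (- a) - Rpower b y * exp (- b)))
    with (plus (scal y (RInt (gf y) a b)) (minus (g b) (g a))).
  2:{ unfold g, minus, plus, opp, scal; simpl; unfold mult; simpl. ring. }
  eapply is_RInt_ext; [|exact H].
  intros x Hx. unfold plus, scal, D; simpl; unfold mult; simpl.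
  unfold gf. replace (y + 1 - 1) with y by ring. ring.
Qed.

Lemma bdry_lim y : 1 <= y ->
  Lim2 (fun a b => Rpower a y * exp (- a) - Rpower b y * exp (- b)) 0.
Proof.
  intros Hy eps Heps.
  set (K := exp (y * ln (2 * y + 2))).
  assert (HK : 0 < K) by apply exp_pos.
  exists (Rmin 1 (eps / 2)). split; [apply Rmin_pos; lra|].
  exists (4 * K / eps). intros a b Ha Had Hb.
  pose proof (Rmin_l 1 (eps / 2)). pose proof (Rmin_r 1 (eps / 2)).
  assert (Hb0 : 0 < b).
  { assert (0 < 4 * K / eps) by (apply Rdiv_lt_0_compat; lra). lra. }
  assert (H1 : 0 <= Rpower a y * exp (- a)).
  { unfold Rpower. pose proof (exp_pos (y * ln a)). pose proof (exp_pos (- a)). nra. }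
  assert (H2 : 0 <= Rpower b y * exp (- b)).
  { unfold Rpower. pose proof (exp_pos (y * ln b)). pose proof (exp_pos (- b)). nra. }
  assert (H3 : Rpower a y * exp (- a) < eps / 2).
  { assert (ln a < 0) by (rewrite <- ln_1; apply ln_increasing; lra).
    assert (Rpower a y <= a).
    { unfold Rpower. rewrite <- (exp_ln a) at 2 by lra. apply exp_mono. nra. }
    assert (exp (- a) <= 1) by (rewrite <- exp_0; apply exp_mono; lra).
    pose proof (exp_pos (-a)). nra. }
  assert (H4 : Rpower b y * exp (- b) < eps / 2).
  { pose proof (Rpower_bound y b ltac:(lra) Hb0) as HRb. fold K in HRb.
    set (E := exp (b / 2)).
    assert (HE : E * exp (- b) * E = 1).
    { unfold E. rewrite <- !exp_plus. replace (b / 2 + - b + b / 2) with 0 by field. apply exp_0. }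
    assert (HEb : 1 + b / 2 <= E) by apply exp_ineq1_le.
    assert (4 * K < eps * b).
    { apply (Rmult_lt_reg_r (/ eps)); [apply Rinv_0_lt_compat; lra|].
      replace (eps * b * / eps) with b by (field; lra). unfold Rdiv in Hb. lra. }
    assert (HE0 : 0 < E) by apply exp_pos.
    pose proof (exp_pos (- b)).
    assert (Rpower b y * exp (- b) <= K * E * exp (- b)) by (apply Rmult_le_compat_r; [lra|]; exact HRb).
    assert (K * E * exp (- b) * E = K) by (transitivity (K * (E * exp (- b) * E)); [ring| rewrite HE; ring]).
    assert (0 <= eps * (E - 1 - b / 2)) by (apply Rmult_le_pos; lra).
    assert (2 * K < eps * E) by nra.
    assert (K * E * exp (- b) < eps / 2).
    { apply (Rmult_lt_reg_r E); [exact HE0|]. lra. }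
    lra. }
  rewrite Rminus_0_r. apply Rabs_lt_between. lra.
Qed.

Lemma gamma_rec y : 1 <= y -> Gamma (y + 1) = y * Gamma y.
Proof.
  intros Hy.
  apply (Lim2_unique (fun a b => RInt (gf (y + 1)) a b)).
  - apply gamma_lim; lra.
  - replace (y * Gamma y) with (y * Gamma y + 1 * 0) by ring.
    apply (Lim2_ext (fun a b => y * RInt (gf y) a b + 1 * (Rpower a y * exp (- a) - Rpower b y * exp (- b)))).
    + intros a b Ha Ha1 Hb. rewrite rec_int by lra. ring.
    + apply Lim2_comb; [apply gamma_lim; auto| apply bdry_lim; auto].
Qed.

Lemma amgm_int y lam a b : 0 < lam -> 0 < a -> a < b ->
  2 * RInt (gf y) a b <= lam * RInt (gf (y - / 2)) a b + / lam * RInt (gf (y + / 2)) a b.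
Proof.
  intros Hl Ha Hab.
  assert (E1 := RInt_scal (V:=R_CompleteNormedModule) (gf y) a b 2 (gf_ex y a b Ha Hab)).
  assert (E2 := RInt_scal (V:=R_CompleteNormedModule) (gf (y - / 2)) a b lam (gf_ex _ a b Ha Hab)).
  assert (E3 := RInt_scal (V:=R_CompleteNormedModule) (gf (y + / 2)) a b (/ lam) (gf_ex _ a b Ha Hab)).
  assert (X2 := ex_RInt_scal (V:=R_CompleteNormedModule) (gf (y - / 2)) a b lam (gf_ex _ a b Ha Hab)).
  assert (X3 := ex_RInt_scal (V:=R_CompleteNormedModule) (gf (y + / 2)) a b (/ lam) (gf_ex _ a b Ha Hab)).
  assert (E4 := RInt_plus (V:=R_CompleteNormedModule) _ _ a b X2 X3).
  assert (X1 := ex_RInt_scal (V:=R_CompleteNormedModule) (gf y) a b 2 (gf_ex y a b Ha Hab)).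
  assert (X4 := ex_RInt_plus (V:=R_CompleteNormedModule) _ _ a b X2 X3).
  unfold scal, plus in *; simpl in *; unfold mult in *; simpl in *.
  rewrite <- E1, <- E2, <- E3, <- E4.
  apply RInt_le; [lra| exact X1| exact X4|].
  intros t Ht. unfold gf.
  set (w := Rpower t (y - / 2 - 1)). set (u := Rpower t (/ 2)). set (e := exp (- t)).
  assert (R1 : Rpower t (y - 1) = w * u).
  { unfold w, u. rewrite <- Rpower_plus. f_equal. field. }
  assert (R2 : Rpower t (y + / 2 - 1) = w * u * u).
  { unfold w, u. rewrite <- !Rpower_plus. f_equal. field. }
  rewrite R1, R2.
  assert (Hw : 0 < w) by (unfold w, Rpower; apply exp_pos).
  assert (He : 0 < e) by (unfold e; apply exp_pos).
  assert (HP : 0 <= w * e * (lam - u) ^ 2 / lam).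
  { apply Rmult_le_pos; [|left; apply Rinv_0_lt_compat; lra].
    apply Rmult_le_pos; [nra|]. apply pow2_ge_0. }
  assert (ID : lam * (w * e) + / lam * (w * u * u * e) - 2 * (w * u * e) = w * e * (lam - u) ^ 2 / lam)
    by (field; lra).
  lra.
Qed.

Lemma gamma_lc y : 3 / 2 <= y -> Gamma y ^ 2 <= Gamma (y - / 2) * Gamma (y + / 2).
Proof.
  intros Hy.
  set (A := Gamma (y - / 2)). set (B := Gamma (y + / 2)).
  assert (HA : 0 < A) by (apply gamma_pos; lra).
  assert (HB : 0 < B) by (apply gamma_pos; lra).
  assert (HG : 0 < Gamma y) by (apply gamma_pos; lra).
  set (lam := sqrt (B / A)).
  assert (Hl2 : lam * lam = B / A) by (apply sqrt_sqrt; left; apply Rdiv_lt_0_compat; lra).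
  assert (Hl : 0 < lam) by (apply sqrt_lt_R0, Rdiv_lt_0_compat; lra).
  assert (Hle : 2 * Gamma y + 0 * Gamma y <= lam * A + / lam * B).
  { apply (Lim2_le (fun a b => 2 * RInt (gf y) a b + 0 * RInt (gf y) a b)
                   (fun a b => lam * RInt (gf (y - / 2)) a b + / lam * RInt (gf (y + / 2)) a b)).
    - apply Lim2_comb; apply gamma_lim; lra.
    - apply Lim2_comb; apply gamma_lim; lra.
    - intros a b Ha Ha1 Hb. rewrite Rmult_0_l, Rplus_0_r. apply amgm_int; lra. }
  assert (EB : B = lam * lam * A) by (rewrite Hl2; field; lra).
  assert (/ lam * B = lam * A) by (rewrite EB; field; lra).
  assert (Gamma y <= lam * A) by lra.
  assert (Gamma y ^ 2 <= (lam * A) ^ 2) by (apply pow_incr; lra).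
  replace ((lam * A) ^ 2) with (lam * lam * A * A) in H1 by ring.
  rewrite Hl2 in H1. replace (B / A * A * A) with (A * B) in H1 by (field; lra). exact H1.
Qed.


Definition cr (x : R) : R :=
  1 + 1 / (4 * x) + 1 / (32 * x ^ 2) - 5 / (128 * x ^ 3)
    - 21 / (2048 * x ^ 4) + 399 / (8192 * x ^ 5).
Definition dr (x : R) : R := cr x + 869 / (65536 * x ^ 6).
Definition Cp (x : R) := 8192*x^5 + 2048*x^4 + 256*x^3 - 320*x^2 - 84*x + 399.
Definition Dp (x : R) := 8 * x * Cp x + 869.

Lemma cr_Cp x : 0 < x -> cr x = Cp x / (8192 * x ^ 5).
Proof. intros. unfold cr, Cp. field. lra. Qed.
Lemma dr_Dp x : 0 < x -> dr x = Dp x / (65536 * x ^ 6).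
Proof. intros. unfold dr, Dp. rewrite cr_Cp by lra. field. lra. Qed.

Lemma hpos a t b : 0 < a -> 0 <= t -> 0 <= b -> 0 < a + t * b.
Proof. intros. nra. Qed.
Lemma hnn a t b : 0 <= a -> 0 <= t -> 0 <= b -> 0 <= a + t * b.
Proof. intros. nra. Qed.
Ltac hnn_t := first [ apply hnn; [lra | assumption | hnn_t] | lra ].
Ltac hpos_t := apply hpos; [lra | assumption | hnn_t].

Lemma H1_pos t : 0 <= t -> 0 < (196516705912161428602809 + t * (430317691859961907319934 + t * (325756349511790022880909 + t * (135251023024656911882556 + t * (36391941991526317165474 + t * (6887246668043362522468 + t * (959379179752241858354 + t * (100935310026017667488 + t * (8126615435137435173 + t * (502403504496278574 + t * (23711225969668481 + t * (840451329710612 + t * (21686366658880 + t * (384970440448 + t * (4207441920 + t * 21356544))))))))))))))).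
Proof. intros Ht. hpos_t. Qed.
Lemma H2_pos t : 0 <= t -> 0 < (706928947587143 + t * (7951560436766348 + t * (41812435401804878 + t * (136303464278087172 + t * (308276175874833001 + t * (513250554281515680 + t * (651550676637168356 + t * (644631865380595560 + t * (503818367309567881 + t * (313362894432660396 + t * (155483118083036814 + t * (61405726774491284 + t * (19163751789973735 + t * (4663268354880296 + t * (865619423477536 + t * (118317517533696 + t * (11218749741056 + t * (658801082368 + t * 18040422400)))))))))))))))))).
Proof. intros Ht. hpos_t. Qed.

Lemma P1_id t : let x := t + 13 in
  (x+1)^2 * x^10 * Cp (x+2)^2 - x*(x+2)^11*Cp x^2 = (196516705912161428602809 + t * (430317691859961907319934 + t * (325756349511790022880909 + t * (135251023024656911882556 + t * (36391941991526317165474 + t * (6887246668043362522468 + t * (959379179752241858354 + t * (100935310026017667488 + t * (8126615435137435173 + t * (502403504496278574 + t * (23711225969668481 + t * (840451329710612 + t * (21686366658880 + t * (384970440448 + t * (4207441920 + t * 21356544))))))))))))))).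
Proof. intros x. unfold x, Cp. ring. Qed.
Lemma P2_id t : let x := t + 1 in
  x*(x+2)^13*Dp x^2 - (x+1)^2 * x^12 * Dp (x+2)^2 = (706928947587143 + t * (7951560436766348 + t * (41812435401804878 + t * (136303464278087172 + t * (308276175874833001 + t * (513250554281515680 + t * (651550676637168356 + t * (644631865380595560 + t * (503818367309567881 + t * (313362894432660396 + t * (155483118083036814 + t * (61405726774491284 + t * (19163751789973735 + t * (4663268354880296 + t * (865619423477536 + t * (118317517533696 + t * (11218749741056 + t * (658801082368 + t * 18040422400)))))))))))))))))).
Proof. intros x. unfold x, Dp, Cp. ring. Qed.


Definition rho (x : R) := Gamma (x / 2 + 1) / Gamma (x / 2 + / 2).

Lemma rho_pos x : 1 <= x -> 0 < rho x.
Proof.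
  intros. unfold rho. apply Rdiv_lt_0_compat; apply gamma_pos; lra.
Qed.

Lemma rho_rec x : 1 <= x -> rho x * rho (x + 1) = (x + 1) / 2.
Proof.
  intros Hx. unfold rho.
  replace ((x + 1) / 2 + / 2) with (x / 2 + 1) by field.
  replace ((x + 1) / 2 + 1) with ((x / 2 + / 2) + 1) by field.
  rewrite (gamma_rec (x / 2 + / 2)) by lra.
  assert (0 < Gamma (x / 2 + 1)) by (apply gamma_pos; lra).
  assert (0 < Gamma (x / 2 + / 2)) by (apply gamma_pos; lra).
  field. lra.
Qed.

Lemma rho_mono x : 1 <= x -> rho x <= rho (x + 1).
Proof.
  intros Hx. unfold rho.
  replace ((x + 1) / 2 + / 2) with (x / 2 + 1) by field.
  pose proof (gamma_lc (x / 2 + 1) ltac:(lra)) as L.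
  replace (x / 2 + 1 - / 2) with (x / 2 + / 2) in L by field.
  replace (x / 2 + 1 + / 2) with ((x + 1) / 2 + 1) in L by field.
  assert (A1 : 0 < Gamma (x / 2 + 1)) by (apply gamma_pos; lra).
  assert (A2 : 0 < Gamma (x / 2 + / 2)) by (apply gamma_pos; lra).
  assert (A3 : 0 < Gamma ((x + 1) / 2 + 1)) by (apply gamma_pos; lra).
  apply (Rmult_le_reg_r (Gamma (x / 2 + / 2) * Gamma (x / 2 + 1))); [nra|].
  replace (Gamma (x / 2 + 1) / Gamma (x / 2 + / 2) * (Gamma (x / 2 + / 2) * Gamma (x / 2 + 1)))
    with (Gamma (x / 2 + 1) ^ 2) by (field; lra).
  replace (Gamma ((x + 1) / 2 + 1) / Gamma (x / 2 + 1) * (Gamma (x / 2 + / 2) * Gamma (x / 2 + 1)))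
    with (Gamma (x / 2 + / 2) * Gamma ((x + 1) / 2 + 1)) by (field; lra).
  exact L.
Qed.

Definition sigma (x : R) := 2 * rho x ^ 2 / x.

Lemma sigma_pos x : 1 <= x -> 0 < sigma x.
Proof. intros. unfold sigma. pose proof (rho_pos x H). apply Rdiv_lt_0_compat; [nra|lra]. Qed.

Lemma sigma_up x : 1 <= x -> sigma x <= (x + 1) / x.
Proof.
  intros Hx. unfold sigma. pose proof (rho_pos x Hx). pose proof (rho_mono x Hx).
  pose proof (rho_rec x Hx).
  assert (rho x ^ 2 <= (x + 1) / 2) by nra.
  unfold Rdiv. apply Rmult_le_compat_r; [left; apply Rinv_0_lt_compat; lra|]. lra.
Qed.

Lemma sigma_lo x : 2 <= x -> 1 <= sigma x.
Proof.
  intros Hx. unfold sigma.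
  pose proof (rho_pos (x - 1) ltac:(lra)). pose proof (rho_mono (x - 1) ltac:(lra)).
  pose proof (rho_rec (x - 1) ltac:(lra)).
  replace (x - 1 + 1) with x in * by ring.
  pose proof (rho_pos x ltac:(lra)).
  assert (x / 2 <= rho x ^ 2) by nra.
  apply (Rmult_le_reg_r x); [lra|]. unfold Rdiv. rewrite Rmult_assoc, Rinv_l by lra. lra.
Qed.

Lemma sigma_step x : 1 <= x -> sigma (x + 2) = sigma x * (x * (x + 2) / (x + 1) ^ 2).
Proof.
  intros Hx. unfold sigma.
  pose proof (rho_rec x Hx). pose proof (rho_rec (x + 1) ltac:(lra)).
  replace (x + 1 + 1) with (x + 2) in H0 by ring.
  pose proof (rho_pos x Hx). pose proof (rho_pos (x + 1) ltac:(lra)).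
  assert (E : rho (x + 2) = rho x * (x + 2) / (x + 1)).
  { apply (Rmult_eq_reg_l (rho (x + 1))); [|lra].
    rewrite H0. replace (rho (x + 1) * (rho x * (x + 2) / (x + 1))) with (rho x * rho (x + 1) * (x + 2) / (x + 1)) by (field; lra).
    rewrite H. field. lra. }
  rewrite E. field. lra.
Qed.

Lemma c_fn_cr n : c_fn n = cr (INR n).
Proof. reflexivity. Qed.
Lemma d_fn_dr n : d_fn n = dr (INR n).
Proof. reflexivity. Qed.

Lemma pows u : 0 < u -> u <= 1 ->
  0 < u ^ 6 /\ u ^ 6 <= u ^ 5 /\ u ^ 5 <= u ^ 4 /\ u ^ 4 <= u ^ 3 /\ u ^ 3 <= u ^ 2 /\ u ^ 2 <= u.
Proof.
  intros. assert (0 < u ^ 2) by nra. assert (0 < u ^ 3) by nra. assert (0 < u ^ 4) by nra.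
  assert (0 < u ^ 5) by nra.
  repeat split; simpl; nra.
Qed.

Lemma cr_u x : 0 < x -> cr x = 1 + / x / 4 + (/ x) ^ 2 / 32 - 5 * (/ x) ^ 3 / 128
   - 21 * (/ x) ^ 4 / 2048 + 399 * (/ x) ^ 5 / 8192.
Proof. intros. unfold cr. field. lra. Qed.

Lemma cr_bounds x : 1 <= x -> 0 < cr x /\ cr x ^ 2 <= 1 + 3 / x.
Proof.
  intros Hx. rewrite cr_u by lra.
  assert (Hu : 0 < / x) by (apply Rinv_0_lt_compat; lra).
  assert (Hu1 : / x <= 1) by (rewrite <- Rinv_1; apply Rinv_le_contravar; lra).
  set (u := / x) in *. replace (3 / x) with (3 * u) by (unfold u; field; lra).
  destruct (pows u Hu Hu1) as (P6 & P5 & P4 & P3 & P2 & P1).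
  set (c := 1 + u / 4 + u ^ 2 / 32 - 5 * u ^ 3 / 128 - 21 * u ^ 4 / 2048 + 399 * u ^ 5 / 8192).
  assert (0 < c) by (unfold c; lra).
  assert (c <= 1 + u) by (unfold c; lra).
  split; [lra|]. assert (u ^ 2 = u * u) by ring. nra.
Qed.

Lemma dr_ge1 x : 1 <= x -> 1 <= dr x.
Proof.
  intros Hx. unfold dr. rewrite cr_u by lra.
  replace (869 / (65536 * x ^ 6)) with (869 * (/ x) ^ 6 / 65536) by (field; lra).
  assert (Hu : 0 < / x) by (apply Rinv_0_lt_compat; lra).
  assert (Hu1 : / x <= 1) by (rewrite <- Rinv_1; apply Rinv_le_contravar; lra).
  set (u := / x) in *.
  destruct (pows u Hu Hu1) as (P6 & P5 & P4 & P3 & P2 & P1). lra.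
Qed.

Lemma Qc_lt x : 13 <= x -> x * (x + 2) * cr x ^ 2 < (x + 1) ^ 2 * cr (x + 2) ^ 2.
Proof.
  intros Hx. rewrite !cr_Cp by lra.
  set (t := x - 13). assert (Hxt : x = t + 13) by (unfold t; ring).
  pose proof (P1_id t) as E. cbv zeta in E. rewrite <- Hxt in E.
  pose proof (H1_pos t ltac:(unfold t; lra)) as HP.
  set (k := 8192 ^ 2 * x ^ 10 * (x + 2) ^ 10).
  assert (Hk : 0 < k) by (unfold k; apply Rmult_lt_0_compat; [apply Rmult_lt_0_compat|]; apply pow_lt; lra).
  apply (Rmult_lt_reg_r k); [exact Hk|].
  replace (x * (x + 2) * (Cp x / (8192 * x ^ 5)) ^ 2 * k) with (x * (x + 2) ^ 11 * Cp x ^ 2)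
    by (unfold k; field; lra).
  replace ((x + 1) ^ 2 * (Cp (x + 2) / (8192 * (x + 2) ^ 5)) ^ 2 * k) with ((x + 1) ^ 2 * x ^ 10 * Cp (x + 2) ^ 2)
    by (unfold k; field; lra).
  lra.
Qed.

Lemma Qd_gt x : 1 <= x -> (x + 1) ^ 2 * dr (x + 2) ^ 2 < x * (x + 2) * dr x ^ 2.
Proof.
  intros Hx. rewrite !dr_Dp by lra.
  set (t := x - 1). assert (Hxt : x = t + 1) by (unfold t; ring).
  pose proof (P2_id t) as E. cbv zeta in E. rewrite <- Hxt in E.
  pose proof (H2_pos t ltac:(unfold t; lra)) as HP.
  set (k := 65536 ^ 2 * x ^ 12 * (x + 2) ^ 12).
  assert (Hk : 0 < k) by (unfold k; apply Rmult_lt_0_compat; [apply Rmult_lt_0_compat|]; apply pow_lt; lra).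
  apply (Rmult_lt_reg_r k); [exact Hk|].
  replace (x * (x + 2) * (Dp x / (65536 * x ^ 6)) ^ 2 * k) with (x * (x + 2) ^ 13 * Dp x ^ 2)
    by (unfold k; field; lra).
  replace ((x + 1) ^ 2 * (Dp (x + 2) / (65536 * (x + 2) ^ 6)) ^ 2 * k) with ((x + 1) ^ 2 * x ^ 12 * Dp (x + 2) ^ 2)
    by (unfold k; field; lra).
  lra.
Qed.

Lemma Q12 : 12 * 14 * (14 * 16) * cr 12 ^ 2 < 13 ^ 2 * 15 ^ 2 * cr 16 ^ 2.
Proof. unfold cr. lra. Qed.


Lemma lower13 x : 13 <= x -> cr x ^ 2 < sigma x.
Proof.
  intros Hx. apply Rnot_le_lt. intro Hc.
  set (g := fun z => sigma z / cr z ^ 2).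
  assert (Hstep : forall z, 13 <= z -> g (z + 2) < g z).
  { intros z Hz. unfold g.
    destruct (cr_bounds z ltac:(lra)) as [Ha _].
    destruct (cr_bounds (z + 2) ltac:(lra)) as [Hb _].
    pose proof (sigma_pos z ltac:(lra)) as Hs.
    rewrite sigma_step by lra.
    pose proof (Qc_lt z Hz) as Q.
    set (a := cr z) in *. set (b := cr (z + 2)) in *. set (s := sigma z) in *.
    apply (Rmult_lt_reg_r (a ^ 2 * b ^ 2 * (z + 1) ^ 2)).
    { apply Rmult_lt_0_compat; [apply Rmult_lt_0_compat|]; apply pow_lt; lra. }
    replace (s * (z * (z + 2) / (z + 1) ^ 2) / b ^ 2 * (a ^ 2 * b ^ 2 * (z + 1) ^ 2))
      with (s * (z * (z + 2) * a ^ 2)) by (field; lra).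
    replace (s / a ^ 2 * (a ^ 2 * b ^ 2 * (z + 1) ^ 2)) with (s * ((z + 1) ^ 2 * b ^ 2)) by (field; lra).
    apply Rmult_lt_compat_l; lra. }
  assert (Hgx : g x <= 1).
  { unfold g. destruct (cr_bounds x ltac:(lra)) as [Ha _].
    assert (0 < cr x ^ 2) by (apply pow_lt; lra).
    apply (Rmult_le_reg_r (cr x ^ 2)); [lra|]. unfold Rdiv. rewrite Rmult_assoc, Rinv_l by lra. lra. }
  set (th := g (x + 2)).
  assert (Hth1 : th < 1) by (unfold th; pose proof (Hstep x Hx); lra).
  assert (Hth0 : 0 < th).
  { unfold th, g. destruct (cr_bounds (x + 2) ltac:(lra)) as [Ha _].
    apply Rdiv_lt_0_compat; [apply sigma_pos; lra| apply pow_lt; lra]. }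
  assert (Hind : forall k : nat, g (x + 2 + 2 * INR k) <= th).
  { induction k as [|k IH].
    - simpl. unfold th. replace (x + 2 + 2 * 0) with (x + 2) by ring. lra.
    - rewrite S_INR. replace (x + 2 + 2 * (INR k + 1)) with (x + 2 + 2 * INR k + 2) by ring.
      pose proof (pos_INR k). pose proof (Hstep (x + 2 + 2 * INR k) ltac:(lra)). lra. }
  destruct (INR_unbounded (3 / (1 - th))) as [k Hk].
  set (m := x + 2 + 2 * INR k).
  pose proof (pos_INR k).
  assert (Hm : 3 / (1 - th) < m) by (unfold m; lra).
  pose proof (Hind k) as Hg. fold m in Hg.
  pose proof (sigma_lo m ltac:(unfold m; lra)) as Hs.
  destruct (cr_bounds m ltac:(unfold m; lra)) as [Hc0 Hc2].
  assert (Hc2' : 0 < cr m ^ 2) by (apply pow_lt; lra).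
  unfold g in Hg.
  assert (sigma m <= th * cr m ^ 2).
  { apply (Rmult_le_reg_r (/ cr m ^ 2)); [apply Rinv_0_lt_compat; lra|].
    replace (th * cr m ^ 2 * / cr m ^ 2) with th by (field; lra). exact Hg. }
  assert (3 / m < 1 - th).
  { apply (Rmult_lt_reg_r m); [unfold m; lra|].
    replace (3 / m * m) with 3 by (field; unfold m; lra).
    apply (Rmult_lt_reg_r (/ (1 - th))); [apply Rinv_0_lt_compat; lra|].
    replace ((1 - th) * m * / (1 - th)) with m by (field; lra). exact Hm. }
  assert (th * (1 + 3 / m) < 1).
  { assert (0 < 3 / m) by (apply Rdiv_lt_0_compat; unfold m; lra). nra. }
  assert (th * cr m ^ 2 <= th * (1 + 3 / m)) by (apply Rmult_le_compat_l; lra).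
  lra.
Qed.

Lemma lower x n : x = INR n -> (12 <= n)%nat -> cr x ^ 2 < sigma x.
Proof.
  intros -> Hn.
  destruct (Nat.eq_dec n 12) as [->|Hne].
  - simpl INR. replace (1 + 1 + 1 + 1 + 1 + 1 + 1 + 1 + 1 + 1 + 1 + 1) with 12 by ring.
    pose proof (lower13 16 ltac:(lra)) as L.
    replace 16 with (12 + 2 + 2) in L at 2 by ring.
    rewrite sigma_step in L by lra. rewrite sigma_step in L by lra.
    replace (12 + 2 + 2) with 16 in L by ring.
    replace (12 + 2) with 14 in L by ring.
    pose proof Q12 as Q.
    pose proof (sigma_pos 12 ltac:(lra)) as S.
    apply Rnot_le_lt. intro Hc.
    assert (sigma 12 * (12 * (12 + 2) / (12 + 1) ^ 2) * (14 * (14 + 2) / (14 + 1) ^ 2)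
            <= cr 12 ^ 2 * (12 * (12 + 2) / (12 + 1) ^ 2) * (14 * (14 + 2) / (14 + 1) ^ 2)).
    { apply Rmult_le_compat_r; [lra|]. apply Rmult_le_compat_r; lra. }
    lra.
  - apply lower13. assert (13 <= n)%nat by lia. apply le_INR in H.
    replace (INR 13) with 13 in H by (simpl; ring). exact H.
Qed.

Lemma upper x : 1 <= x -> sigma x < dr x ^ 2.
Proof.
  intros Hx. apply Rnot_le_lt. intro Hc.
  set (g := fun z => sigma z / dr z ^ 2).
  assert (Hd : forall z, 1 <= z -> 0 < dr z ^ 2) by (intros z Hz; pose proof (dr_ge1 z Hz); apply pow_lt; lra).
  assert (Hstep : forall z, 1 <= z -> g z < g (z + 2)).
  { intros z Hz. unfold g.
    pose proof (dr_ge1 z Hz) as Ha. pose proof (dr_ge1 (z + 2) ltac:(lra)) as Hb.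
    pose proof (sigma_pos z ltac:(lra)) as Hs.
    rewrite sigma_step by lra.
    pose proof (Qd_gt z Hz) as Q.
    set (a := dr z) in *. set (b := dr (z + 2)) in *. set (s := sigma z) in *.
    apply (Rmult_lt_reg_r (a ^ 2 * b ^ 2 * (z + 1) ^ 2)).
    { apply Rmult_lt_0_compat; [apply Rmult_lt_0_compat|]; apply pow_lt; lra. }
    replace (s * (z * (z + 2) / (z + 1) ^ 2) / b ^ 2 * (a ^ 2 * b ^ 2 * (z + 1) ^ 2))
      with (s * (z * (z + 2) * a ^ 2)) by (field; lra).
    replace (s / a ^ 2 * (a ^ 2 * b ^ 2 * (z + 1) ^ 2)) with (s * ((z + 1) ^ 2 * b ^ 2)) by (field; lra).
    apply Rmult_lt_compat_l; lra. }
  assert (Hgx : 1 <= g x).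
  { unfold g. pose proof (Hd x Hx).
    apply (Rmult_le_reg_r (dr x ^ 2)); [lra|]. unfold Rdiv. rewrite Rmult_assoc, Rinv_l by lra. lra. }
  set (th := g (x + 2)).
  assert (Hth1 : 1 < th) by (unfold th; pose proof (Hstep x Hx); lra).
  assert (Hind : forall k : nat, th <= g (x + 2 + 2 * INR k)).
  { induction k as [|k IH].
    - simpl. unfold th. replace (x + 2 + 2 * 0) with (x + 2) by ring. lra.
    - rewrite S_INR. replace (x + 2 + 2 * (INR k + 1)) with (x + 2 + 2 * INR k + 2) by ring.
      pose proof (pos_INR k). pose proof (Hstep (x + 2 + 2 * INR k) ltac:(lra)). lra. }
  destruct (INR_unbounded (1 / (th - 1))) as [k Hk].
  set (m := x + 2 + 2 * INR k).
  pose proof (pos_INR k).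
  assert (Hm : 1 / (th - 1) < m) by (unfold m; lra).
  pose proof (Hind k) as Hg. fold m in Hg.
  pose proof (sigma_up m ltac:(unfold m; lra)) as Hs.
  pose proof (dr_ge1 m ltac:(unfold m; lra)) as Hd1.
  pose proof (Hd m ltac:(unfold m; lra)) as Hd2.
  unfold g in Hg.
  assert (1 <= dr m ^ 2) by (simpl; nra).
  assert (sigma m / dr m ^ 2 <= sigma m).
  { apply (Rmult_le_reg_r (dr m ^ 2)); [lra|].
    replace (sigma m / dr m ^ 2 * dr m ^ 2) with (sigma m) by (field; lra).
    pose proof (sigma_pos m ltac:(unfold m; lra)). nra. }
  assert (1 / m < th - 1).
  { apply (Rmult_lt_reg_r m); [unfold m; lra|].
    replace (1 / m * m) with 1 by (field; unfold m; lra).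
    apply (Rmult_lt_reg_r (/ (th - 1))); [apply Rinv_0_lt_compat; lra|].
    replace ((th - 1) * m * / (th - 1)) with m by (field; lra). lra. }
  assert ((m + 1) / m = 1 + 1 / m) by (field; unfold m; lra).
  lra.
Qed.

Lemma omega_ratio n : (1 <= n)%nat -> Omega (n - 1) / Omega n = rho (INR n) / sqrt PI.
Proof.
  intros Hn. unfold Omega, rho. rewrite minus_INR by exact Hn. simpl (INR 1).
  set (x := INR n).
  replace ((x - 1) / 2 + 1) with (x / 2 + / 2) by field.
  assert (EP : Rpower PI (x / 2) = Rpower PI ((x - 1) / 2) * sqrt PI).
  { rewrite <- Rpower_sqrt by apply PI_RGT_0. rewrite <- Rpower_plus. f_equal. field. }
  rewrite EP.
  assert (1 <= x) by (unfold x; apply le_INR in Hn; simpl in Hn; lra).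
  assert (0 < Gamma (x / 2 + 1)) by (apply gamma_pos; lra).
  assert (0 < Gamma (x / 2 + / 2)) by (apply gamma_pos; lra).
  assert (0 < sqrt PI) by (apply sqrt_lt_R0, PI_RGT_0).
  assert (0 < Rpower PI ((x - 1) / 2)) by (unfold Rpower; apply exp_pos).
  field. lra.
Qed.


Lemma sq_lt a b : 0 <= a -> 0 <= b -> a * a < b * b -> a < b.
Proof. intros. nra. Qed.

Theorem theorem9 :
  (forall n : nat, (12 <= n)%nat ->
     sqrt (INR n / (2 * PI)) * c_fn n < Omega (n - 1) / Omega n) /\
  (forall n : nat, (1 <= n)%nat ->
     Omega (n - 1) / Omega n < sqrt (INR n / (2 * PI)) * d_fn n).
Proof.
  assert (HPI : 0 < PI) by apply PI_RGT_0.
  assert (Hr : 0 < sqrt PI) by (apply sqrt_lt_R0; lra).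
  assert (Hr2 : sqrt PI * sqrt PI = PI) by (apply sqrt_sqrt; lra).
  split.
  - intros n Hn. rewrite omega_ratio by lia. rewrite c_fn_cr.
    assert (Hx : 12 <= INR n) by (apply le_INR in Hn; simpl in Hn; lra).
    pose proof (lower (INR n) n eq_refl Hn) as L.
    set (x := INR n) in *.
    destruct (cr_bounds x ltac:(lra)) as [Hc _].
    pose proof (rho_pos x ltac:(lra)) as Hp.
    set (S := sqrt (x / (2 * PI))).
    assert (HS : 0 <= S) by apply sqrt_pos.
    assert (HS2 : S * S = x / (2 * PI)) by (apply sqrt_sqrt; apply Rdiv_le_0_compat; lra).
    unfold sigma in L.
    assert (L2 : x / 2 * cr x ^ 2 < rho x ^ 2).
    { apply (Rmult_lt_reg_r (2 / x)); [apply Rdiv_lt_0_compat; lra|].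
      replace (x / 2 * cr x ^ 2 * (2 / x)) with (cr x ^ 2) by (field; lra).
      replace (rho x ^ 2 * (2 / x)) with (2 * rho x ^ 2 / x) by (field; lra). exact L. }
    assert (S * cr x * sqrt PI < rho x).
    { apply sq_lt; [apply Rmult_le_pos; [apply Rmult_le_pos; lra| lra]| lra|].
      replace (S * cr x * sqrt PI * (S * cr x * sqrt PI)) with ((S * S) * (sqrt PI * sqrt PI) * cr x ^ 2) by ring.
      rewrite HS2, Hr2. replace (x / (2 * PI) * PI * cr x ^ 2) with (x / 2 * cr x ^ 2) by (field; lra).
      replace (rho x * rho x) with (rho x ^ 2) by ring. exact L2. }
    apply (Rmult_lt_reg_r (sqrt PI)); [lra|].
    replace (rho x / sqrt PI * sqrt PI) with (rho x) by (field; lra). exact H.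
  - intros n Hn. rewrite omega_ratio by lia. rewrite d_fn_dr.
    assert (Hx : 1 <= INR n) by (apply le_INR in Hn; simpl in Hn; lra).
    pose proof (upper (INR n) Hx) as L.
    set (x := INR n) in *.
    pose proof (dr_ge1 x Hx) as Hd.
    pose proof (rho_pos x ltac:(lra)) as Hp.
    set (S := sqrt (x / (2 * PI))).
    assert (HS : 0 <= S) by apply sqrt_pos.
    assert (HS2 : S * S = x / (2 * PI)) by (apply sqrt_sqrt; apply Rdiv_le_0_compat; lra).
    unfold sigma in L.
    assert (L2 : rho x ^ 2 < x / 2 * dr x ^ 2).
    { apply (Rmult_lt_reg_r (2 / x)); [apply Rdiv_lt_0_compat; lra|].
      replace (x / 2 * dr x ^ 2 * (2 / x)) with (dr x ^ 2) by (field; lra).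
      replace (rho x ^ 2 * (2 / x)) with (2 * rho x ^ 2 / x) by (field; lra). exact L. }
    assert (rho x < S * dr x * sqrt PI).
    { apply sq_lt; [lra| apply Rmult_le_pos; [apply Rmult_le_pos; lra| lra]|].
      replace (S * dr x * sqrt PI * (S * dr x * sqrt PI)) with ((S * S) * (sqrt PI * sqrt PI) * dr x ^ 2) by ring.
      rewrite HS2, Hr2. replace (x / (2 * PI) * PI * dr x ^ 2) with (x / 2 * dr x ^ 2) by (field; lra).
      replace (rho x * rho x) with (rho x ^ 2) by ring. exact L2. }
    apply (Rmult_lt_reg_r (sqrt PI)); [lra|].
    replace (rho x / sqrt PI * sqrt PI) with (rho x) by (field; lra). exact H.
Qed.
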